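(* Under the model described in the context, for all $s\ge0$, \[ \int_0^\infty\!\!\int_0^\infty \left(1-e^{-sPhG(t)}\right) q(h)\,p(t)\,dh\,dt<\infty . \]
   Context: Let $\lambda>0$, $\alpha>2$. Transmitter locations form a Poisson point process on $\mathbb R^2$ with locally finite mean measure $\Lambda$ and $\Lambda(\mathbb R^2)=\infty$. A test receiver is at a fixed point $\mathbf X_o$, $T(\mathbf x)=\|\mathbf x-\mathbf X_o\|_2$, and $\Lambda(\{\mathbf x: T(\mathbf x)\in A\})=\lambda\int_A p(t)\,dt$ for all Borel $A\subseteq[0,\infty)$, where $p\ge0$ satisfies $p(t)=O(t^{\alpha-1-\epsilon})$ as $t\to\infty$ for some $\epsilon>0$. The path-loss function $G:[0,\infty)\to[0,\infty)$ is bounded, monotone non-increasing, with $G(t)=O(t^{-\alpha})$ as $t\to\infty$. $q$ is a probability density on $[0,\infty)$ with finite first, second and third moments. $P>0$. *)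

(* Defs.v *)
From HB Require Import structures.
From mathcomp Require Import all_boot all_order all_algebra.
From mathcomp Require Import all_classical all_reals all_analysis.
Set Implicit Arguments. Unset Strict Implicit. Unset Printing Implicit Defensive.
Import Order.TTheory GRing.Theory Num.Theory.
Local Open Scope ring_scope.
Local Open Scope classical_set_scope.

Definition dist2 {R : realType} (Xo x : R * R) : R :=
  Num.sqrt ((x.1 - Xo.1) ^+ 2 + (x.2 - Xo.2) ^+ 2).

Definition bigO_pow_at_infty {R : realType} (f : R -> R) (beta : R) : Prop :=
  exists C M : R, 0 < M /\ forall t : R, M <= t -> `|f t| <= C * t `^ beta.

(* Main.v *)
Require Import Defs.
From HB Require Import structures.
From mathcomp Require Import all_boot all_order all_algebra.
From mathcomp Require Import all_classical all_reals all_analysis.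
From mathcomp Require Import measurable_realfun.
From mathcomp Require Import ring lra.
Import Order.TTheory GRing.Theory Num.Theory.
Local Open Scope ring_scope.
Local Open Scope classical_set_scope.

Lemma max0_mono (R : realType) (x y : R) : x <= y ->
  0 <= Num.max x 0 /\ Num.max x 0 <= Num.max y 0.
Proof.
move=> xy; split; first by rewrite le_max lexx orbT.
by rewrite ge_max !le_max xy lexx !orbT.
Qed.

Lemma mdist (R : realType) (Xo : R * R) : measurable_fun setT (dist2 Xo).
Proof.
rewrite /dist2.
apply: measurableT_comp; first exact: continuous_measurable_fun (@sqrt_continuous R).
apply: measurable_funD.
  apply: measurable_funX; apply: measurable_funB => //; exact: measurable_fst.
apply: measurable_funX; apply: measurable_funB => //; exact: measurable_snd.
Qed.

Lemma powRN_cvg0 (R : realType) (e : R) : 0 < e ->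
  x `^ (- e) @[x --> +oo] --> 0.
Proof.
move=> e0.
have L : (fun x : R => e * ln x) @ +oo --> +oo.
  apply/cvgryPge => A; near=> x.
  have x0 : 0 < x by near: x; apply: nbhs_pinfty_gt.
  rewrite -ler_pdivrMl// -[X in X <= _]expRK ler_ln; [|by rewrite posrE expR_gt0|by rewrite posrE].
  by near: x; apply: nbhs_pinfty_ge; exact: num_real.
apply: (@cvg_trans _ ((expR (- (e * ln x))) @[x --> +oo])).
  apply: near_eq_cvg; near=> x.
  have x0 : 0 < x by near: x; apply: nbhs_pinfty_gt.
  by rewrite /powR gt_eqF// mulNr.
have := cvg_comp _ _ L (@cvgr_expR R). by [].
Unshelve. all: by end_near. Qed.

Local Open Scope ereal_scope.
Lemma tail_int (R : realType) (a e : R) : (0 < a)%R -> (0 < e)%R ->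
  \int[@lebesgue_measure R]_(x in `[a, +oo[) (x `^ (-1 - e))%:E
    = (a `^ (- e) / e)%:E.
Proof.
move=> a0 e0.
pose F := fun x : R => ((- e^-1) * (x `^ (- e)))%R.
have dF (x : R) : (0 < x)%R -> is_derive x 1%R F (x `^ (-1 - e))%R.
  move=> x0.
  have H := is_derive1_powR (- e) x0.
  have -> : (x `^ (-1 - e) = (- e^-1) *: (- e * x `^ (- e - 1)))%R.
    by rewrite /GRing.scale/= mulrA mulrNN mulVf ?gt_eqF// mul1r addrC.
  exact: is_deriveZ.
have -> : (a `^ (- e) / e = 0 - F a)%R by rewrite /F sub0r mulNr opprK mulrC.
apply: ge0_continuous_FTC2y.
- by move=> x _; exact: powR_ge0.
- apply: derivable_within_continuous => x; rewrite in_itv/= andbT => ax.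
  by apply: derivable_powR; rewrite in_itv/= andbT (lt_le_trans a0 ax).
- rewrite -[0%R](mulr0 (- e^-1)%R); apply: cvgMr; exact: powRN_cvg0.
- move=> x ax; have x0 := lt_trans a0 ax; by have [] := dF x x0.
- have [d _] := dF a a0.
  have := derivable1_diffP F a; move=> [/(_ d) dd _].
  have cF := differentiable_continuous dd.
  exact: cvg_at_right_filter cF.
- move=> x; rewrite in_itv/= andbT => ax.
  rewrite derive1E; have [_ ->] := dF x (lt_trans a0 ax); by [].
Qed.

Lemma le_integral_nm d (T : measurableType d) (R : realType)
  (mu : {measure set T -> \bar R}) (D : set T) (f1 f2 : T -> \bar R) :
  (forall x, D x -> 0 <= f1 x) -> (forall x, D x -> f1 x <= f2 x) ->
  \int[mu]_(x in D) f1 x <= \int[mu]_(x in D) f2 x.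
Proof.
move=> f10 f12.
have f20 x : D x -> 0 <= f2 x by move=> Dx; exact: le_trans (f10 x Dx) (f12 x Dx).
rewrite (ge0_integralE _ f10) (ge0_integralE _ f20).
apply: le_ereal_sup => _ [h /= hf <-]; exists h => //= x.
apply: (le_trans (hf x)); rewrite /patch; case: ifP => // /set_mem Dx.
exact: f12.
Qed.
Local Close Scope ereal_scope.
Theorem lemma1 (R : realType) (lambda alpha eps P : R)
  (Lambda : {measure set (R * R)%type -> \bar R}) (Xo : R * R)
  (p G q : R -> R) :
  0 < lambda -> 2 < alpha -> 0 < P ->
  (* Lambda: locally finite (finite on bounded measurable sets), infinite total mass *)
  (forall A : set (R * R), measurable A ->
     (exists r : R, forall x, A x -> dist2 Xo x <= r) -> (Lambda A < +oo)%E) ->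
  Lambda setT = +oo%E ->
  (* p >= 0 and the distance distribution of Lambda is lambda p(t) dt *)
  measurable_fun [set t : R | (0 <= t)%R] p ->
  (forall t, 0 <= t -> 0 <= p t) ->
  (forall A : set R, measurable A -> A `<=` [set t | 0 <= t] ->
     Lambda (dist2 Xo @^-1` A) =
       (lambda%:E * \int[@lebesgue_measure R]_(t in A) (p t)%:E)%E) ->
  0 < eps -> bigO_pow_at_infty p (alpha - 1 - eps) ->
  (* G : [0,oo) -> [0,oo) bounded, non-increasing, O(t^-alpha) *)
  (forall t, 0 <= t -> 0 <= G t) ->
  (exists B : R, forall t, 0 <= t -> G t <= B) ->
  (forall x y, 0 <= x -> x <= y -> G y <= G x) ->
  bigO_pow_at_infty G (- alpha) ->
  (* q probability density on [0,oo) with finite first three moments *)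
  measurable_fun [set h : R | (0 <= h)%R] q ->
  (forall h, 0 <= h -> 0 <= q h) ->
  (\int[@lebesgue_measure R]_(h in [set h : R | (0 <= h)%R]) (q h)%:E = 1)%E ->
  (forall k : nat, (1 <= k <= 3)%N ->
     (\int[@lebesgue_measure R]_(h in [set h : R | (0 <= h)%R]) ((h ^+ k * q h)%R)%:E
        < +oo)%E) ->
  forall s : R, 0 <= s ->
  (\int[@lebesgue_measure R]_(t in [set t : R | (0 <= t)%R])
     \int[@lebesgue_measure R]_(h in [set h : R | (0 <= h)%R])
        (((1 - expR (- (s * P * h * G t))) * q h * p t)%R)%:E < +oo)%E.
Proof.

Proof.
move=> lam0 alpha2 P0 locfin _ mp p0 Lp eps0 [Cp [Mp [Mp0 pO]]] G0 [B GB] Gni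
  [Cg [Mg [Mg0 GO]]] mq q0 _ qmom s s0.
set mu := @lebesgue_measure R.
set D := [set t : R | (0 <= t)%R].
have DE : D = `[0, +oo[%classic.
  by apply/seteqP; split => x /=; rewrite in_itv/= andbT.
have mD : measurable D by rewrite DE; exact: measurable_itv.
have mhq : measurable_fun D (fun h => h * q h).
  by apply: measurable_funM => //; exact: measurable_id.
have hq0 h : D h -> (0 <= (h * q h)%:E)%E.
  by move=> Dh; rewrite lee_fin mulr_ge0//; exact: q0.
have m1fin : (\int[mu]_(h in D) (h * q h)%:E < +oo)%E.
  have := qmom 1%N isT; by under eq_integral do rewrite expr1.
have m1ge0 : (0 <= \int[mu]_(h in D) (h * q h)%:E)%E by exact: integral_ge0.
set m1 := fine (\int[mu]_(h in D) (h * q h)%:E).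
have m1E : (\int[mu]_(h in D) (h * q h)%:E = m1%:E)%E.
  by rewrite /m1 fineK// ge0_fin_numE.
have m10 : 0 <= m1 by rewrite -lee_fin -m1E.
have inner t : D t -> (\int[mu]_(h in D)
     ((1 - expR (- (s * P * h * G t))) * q h * p t)%:E
     <= ((s * P * m1) * (G t * p t))%:E)%E.
  move=> Dt.
  have Gt0 := G0 t Dt; have pt0 := p0 t Dt.
  have k0 : 0 <= s * P * G t * p t by rewrite !mulr_ge0// ltW.
  apply: (@le_trans _ _ (\int[mu]_(h in D) ((s * P * G t * p t)%:E * (h * q h)%:E))%E).
    apply: le_integral_nm => h Dh.
      have : expR (- (s * P * h * G t)) <= 1.
        by rewrite -expR0 ler_expR oppr_le0 !mulr_ge0// ltW.
      by move=> e1; rewrite lee_fin !mulr_ge0// ?subr_ge0//; exact: q0.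
    rewrite -EFinM lee_fin.
    have e1 := expR_ge1Dx (- (s * P * h * G t)).
    have : 1 - expR (- (s * P * h * G t)) <= s * P * h * G t by lra.
    move=> hb.
    have qh0 := q0 h Dh.
    have -> : s * P * G t * p t * (h * q h) = (s * P * h * G t) * q h * p t by ring.
    by rewrite ler_wpM2r// ler_wpM2r.
  rewrite ge0_integralZl_EFin//; last exact/measurable_EFinP.
  by rewrite m1E -EFinM lee_fin -!mulrA (mulrC m1) -!mulrA.
set c := s * P * m1.
have c0 : 0 <= c by rewrite !mulr_ge0// ltW.
have mG : measurable_fun D G.
  pose G' := fun t => G (Num.max t 0).
  apply: (eq_measurable_fun G').
    by move=> t; rewrite inE /G' => Dt; rewrite max_l.
  apply: nonincreasing_measurable => // x y xy.
  by have [h1 h2] := @max0_mono _ _ _ xy; apply: Gni.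
have mGp : measurable_fun D (fun t => G t * p t) by exact: measurable_funM.
have GPfin : (\int[mu]_(t in D) (G t * p t)%:E < +oo)%E.
  set M0 := Num.max 1 (Num.max Mp Mg).
  have M01 : 1 <= M0 by rewrite le_max lexx.
  have M0p : Mp <= M0 by rewrite !le_max lexx orbT.
  have M0g : Mg <= M0 by rewrite !le_max lexx !orbT.
  have M00 : 0 < M0 by exact: lt_le_trans ltr01 M01.
  set A1 := `[0, M0[%classic.
  set A2 := `[M0, +oo[%classic.
  have DU : D = A1 `|` A2.
    apply/seteqP; split => x /=.
      rewrite /A1 /A2 /= !in_itv /= andbT => x0.
      case: (ltP x M0) => xM; [left|right]; rewrite /= ?in_itv/= ?xM ?andbT //.
    rewrite /A1 /A2 /= !in_itv /= andbT => -[/andP[]//|].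
    by move=> /(le_trans (ltW M00)).
  have dA : [disjoint A1 & A2].
    rewrite /A1 /A2; apply/eqP/seteqP; split => x //=.
    rewrite !in_itv/= andbT => -[/andP[_ xM] Mx].
    by move: (lt_le_trans xM Mx); rewrite ltxx.
  have mA1 : measurable A1 by exact: measurable_itv.
  have mA2 : measurable A2 by exact: measurable_itv.
  have A1D : A1 `<=` D by rewrite DU; exact: subsetUl.
  have A2D : A2 `<=` D by rewrite DU; exact: subsetUr.
  have GP0 t : D t -> (0 <= (G t * p t)%:E)%E.
    by move=> Dt; rewrite lee_fin mulr_ge0//; [exact: G0|exact: p0].
  rewrite DU ge0_integral_setU//; last 2 first.
    - by rewrite -DU; exact/measurable_EFinP.
    - by rewrite -DU.
  apply: lte_add_pinfty.
  - have B0 : 0 <= B by apply: le_trans (GB 0 (lexx _)); exact: G0.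
    have I1fin : (\int[mu]_(t in A1) (p t)%:E < +oo)%E.
      have mpre : measurable (dist2 Xo @^-1` A1).
        by have := @mdist _ Xo measurableT _ mA1; rewrite setTI.
      have bd : exists r, forall x, (dist2 Xo @^-1` A1) x -> dist2 Xo x <= r.
        by exists M0 => x; rewrite /A1 /= in_itv/= => /andP[_ /ltW].
      have := locfin _ mpre bd; rewrite Lp//.
      rewrite ltey => H; rewrite ltey; apply/negP => /eqP Iy.
      by move: H; rewrite Iy mulry gtr0_sg ?mul1e ?eqxx.
    apply: (@le_lt_trans _ _ (\int[mu]_(t in A1) (B * p t)%:E)%E).
      apply: le_integral_nm => t /A1D Dt; first exact: GP0.
      by rewrite lee_fin ler_wpM2r//; [exact: p0|exact: GB].
    under eq_integral do rewrite EFinM.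
    rewrite ge0_integralZl_EFin//; last 2 first.
      - by move=> t /A1D Dt; rewrite lee_fin; exact: p0.
      - by apply/measurable_EFinP; exact: measurable_funS mp.
    exact: lte_mul_pinfty.
  - have Cg0 : 0 <= Cg.
      have := le_trans (normr_ge0 _) (GO Mg (lexx _)).
      by rewrite pmulr_lge0// powR_gt0.
    have Cp0 : 0 <= Cp.
      have := le_trans (normr_ge0 _) (pO Mp (lexx _)).
      by rewrite pmulr_lge0// powR_gt0.
    apply: (@le_lt_trans _ _
      (\int[mu]_(t in A2) ((Cg * Cp) * t `^ (-1 - eps))%:E)%E).
      apply: le_integral_nm => t A2t; first exact: GP0 (A2D _ A2t).
      have Dt := A2D _ A2t.
      have Mt : M0 <= t by move: A2t; rewrite /A2 /= in_itv/= andbT.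
      have t0 : 0 < t by exact: lt_le_trans M00 Mt.
      have Gt0 := G0 t Dt; have pt0 := p0 t Dt.
      have -> : t `^ (-1 - eps) = t `^ (- alpha) * t `^ (alpha - 1 - eps).
        rewrite -powRD; last by rewrite (gt_eqF t0) implybT.
        by congr (_ `^ _); ring.
      rewrite lee_fin mulrACA ler_pM//.
        by rewrite -(ger0_norm Gt0); apply: GO; exact: le_trans M0g Mt.
      by rewrite -(ger0_norm pt0); apply: pO; exact: le_trans M0p Mt.
    under eq_integral do rewrite EFinM.
    have CC0 : 0 <= Cg * Cp by exact: mulr_ge0.
    rewrite ge0_integralZl_EFin//.
    - by rewrite tail_int// -EFinM ltry.
    - by move=> t _; rewrite lee_fin powR_ge0.
    - apply/measurable_EFinP; apply: measurable_funS (measurable_powR _) => //.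
apply: (@le_lt_trans _ _ (\int[mu]_(t in D) (c * (G t * p t))%:E)%E).
  apply: le_integral_nm => t Dt; last exact: inner.
  apply: integral_ge0 => h Dh.
  have : expR (- (s * P * h * G t)) <= 1.
    have Gt0 := G0 t Dt; have hh : 0 <= h by [].
    by rewrite -expR0 ler_expR oppr_le0 !mulr_ge0// ltW.
  by move=> e1; rewrite lee_fin !mulr_ge0// ?subr_ge0//; [exact: q0|exact: p0].
under eq_integral do rewrite EFinM.
rewrite ge0_integralZl_EFin//; last exact/measurable_EFinP.
  exact: lte_mul_pinfty.
by move=> t Dt; rewrite lee_fin mulr_ge0//; [exact: G0|exact: p0].
Qed.
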